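(* Let $\lambda,R_c,H,\alpha_L,\alpha_N,B,C>0$. For $0<\delta<1$ define, with $P_L(r_0)=\frac{1}{1+C\exp(-B(\arctan(H/r_0)-C))}$, $P_N=1-P_L$, $A_s(r_0)=(\delta(H^2+r_0^2)^{\alpha_s/2})^{1/\alpha_N}$, $B_s(r_0)=(\frac1\delta(H^2+r_0^2)^{\alpha_s/2})^{1/\alpha_N}$ ($s\in\{L,N\}$), the area fractions $\bar{C}_{\mathcal{A}_i}=C_{\mathcal{A}_i}/(\pi R_c^2)$, where $C_{\mathcal{A}_1}=2\pi\sum_{s}\int_0^{R_c}P_s(r_0)F_{r_1|r_0}(A_s(r_0))r_0\,dr_0$, $C_{\mathcal{A}_2}=2\pi\sum_{s}\int_0^{R_c}P_s(r_0)(F_{r_1|r_0}(B_s(r_0))-F_{r_1|r_0}(A_s(r_0)))r_0\,dr_0$, $C_{\mathcal{A}_3}=2\pi\sum_{s}\int_0^{R_c}P_s(r_0)(1-F_{r_1|r_0}(B_s(r_0)))r_0\,dr_0$. Then, on $0<\delta<1$, $\bar{C}_{\mathcal{A}_1}$ and $\bar{C}_{\mathcal{A}_3}$ increase with $\delta$, while $\bar{C}_{\mathcal{A}_2}$ decreases with $\delta$.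
   Context: $F_{r_1|r_0}$ is the CDF of the distance $r_1$ from a point $x_0=(r_0,0)$, $0\le r_0\le R_c$, to the nearest point of $\Phi\setminus\{y:\|y\|\le R_c\}$, where $\Phi$ is a homogeneous Poisson point process of intensity $\lambda$ on $\mathbb{R}^2$: $F_{r_1|r_0}(r)=0$ for $r\le R_c-r_0$, $=1-e^{-\lambda\zeta_2(r)}$ for $R_c-r_0<r<R_c+r_0$ where $\zeta_2(r)=\pi r^2-\theta_1R_c^2+R_c^2\sin\theta_1\cos\theta_1-\theta_2r^2+r^2\sin\theta_2\cos\theta_2$, $\theta_1=\arccos\frac{R_c^2+r_0^2-r^2}{2R_cr_0}$, $\theta_2=\arccos\frac{r_0^2+r^2-R_c^2}{2r_0r}$, and $=1-e^{-\lambda(\pi r^2-\pi R_c^2)}$ otherwise. $C_{\mathcal{A}_i}$ is the expected area of the set of users in the malfunction disc served by the nearest ground station only ($i=1$), cooperatively by the UAV and the nearest ground station ($i=2$), or by the UAV only ($i=3$), and $\delta$ is the cooperation parameter. *)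

(* Defs.v *)
From Stdlib Require Import Reals Lra.
From Coquelicot Require Import Coquelicot.
Open Scope R_scope.

Definition zeta2 (Rc r0 r : R) : R :=
  let th1 := acos ((Rc^2 + r0^2 - r^2) / (2 * Rc * r0)) in
  let th2 := acos ((r0^2 + r^2 - Rc^2) / (2 * r0 * r)) in
  PI * r^2 - th1 * Rc^2 + Rc^2 * sin th1 * cos th1
           - th2 * r^2 + r^2 * sin th2 * cos th2.

Definition F_r1 (lam Rc r0 r : R) : R :=
  if Rle_dec r (Rc - r0) then 0
  else if Rlt_dec r (Rc + r0) then 1 - exp (- lam * zeta2 Rc r0 r)
  else 1 - exp (- lam * (PI * r^2 - PI * Rc^2)).

Definition P_L (H B C r0 : R) : R :=
  1 / (1 + C * exp (- B * (atan (H / r0) - C))).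
Definition P_N (H B C r0 : R) : R := 1 - P_L H B C r0.

Definition A_s (H alphaN alpha_s delta r0 : R) : R :=
  Rpower (delta * Rpower (H^2 + r0^2) (alpha_s / 2)) (1 / alphaN).
Definition B_s (H alphaN alpha_s delta r0 : R) : R :=
  Rpower (/ delta * Rpower (H^2 + r0^2) (alpha_s / 2)) (1 / alphaN).

Definition C_A1 (lam Rc H alphaL alphaN B C delta : R) : R :=
  2 * PI * (RInt (fun r0 => P_L H B C r0 * F_r1 lam Rc r0 (A_s H alphaN alphaL delta r0) * r0) 0 Rc
          + RInt (fun r0 => P_N H B C r0 * F_r1 lam Rc r0 (A_s H alphaN alphaN delta r0) * r0) 0 Rc).

Definition C_A2 (lam Rc H alphaL alphaN B C delta : R) : R :=
  2 * PI * (RInt (fun r0 => P_L H B C r0 *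
                    (F_r1 lam Rc r0 (B_s H alphaN alphaL delta r0)
                     - F_r1 lam Rc r0 (A_s H alphaN alphaL delta r0)) * r0) 0 Rc
          + RInt (fun r0 => P_N H B C r0 *
                    (F_r1 lam Rc r0 (B_s H alphaN alphaN delta r0)
                     - F_r1 lam Rc r0 (A_s H alphaN alphaN delta r0)) * r0) 0 Rc).

Definition C_A3 (lam Rc H alphaL alphaN B C delta : R) : R :=
  2 * PI * (RInt (fun r0 => P_L H B C r0 *
                    (1 - F_r1 lam Rc r0 (B_s H alphaN alphaL delta r0)) * r0) 0 Rc
          + RInt (fun r0 => P_N H B C r0 *
                    (1 - F_r1 lam Rc r0 (B_s H alphaN alphaN delta r0)) * r0) 0 Rc).

Definition Cbar_A1 lam Rc H alphaL alphaN B C delta :=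
  C_A1 lam Rc H alphaL alphaN B C delta / (PI * Rc^2).
Definition Cbar_A2 lam Rc H alphaL alphaN B C delta :=
  C_A2 lam Rc H alphaL alphaN B C delta / (PI * Rc^2).
Definition Cbar_A3 lam Rc H alphaL alphaN B C delta :=
  C_A3 lam Rc H alphaL alphaN B C delta / (PI * Rc^2).

(* Main.v *)
Require Import Defs.
From Stdlib Require Import Reals Lra.
From Coquelicot Require Import Coquelicot.
Open Scope R_scope.


Lemma loc_of (x : R) (P : R -> Prop) (d : R) :
  0 < d -> (forall y, Rabs (y - x) < d -> P y) -> locally x P.
Proof. intros Hd H. exists (mkposreal d Hd). intros y Hy. apply H. exact Hy. Qed.

Lemma c_comp (f g : R -> R) x : continuous f x -> continuous g (f x) -> continuous (fun y => g (f y)) x.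
Proof. apply continuous_comp. Qed.
Lemma c_der (f : R -> R) x : ex_derive f x -> continuous f x.
Proof. intros H. exact (@ex_derive_continuous R_AbsRing R_NormedModule f x H). Qed.

Lemma acos_ge1 x : 1 <= x -> acos x = 0.
Proof. intros H. unfold acos. destruct (Rle_dec x (-1)); [lra|]. destruct (Rle_dec 1 x); lra. Qed.
Lemma acos_lem1 x : x <= -1 -> acos x = PI.
Proof. intros H. unfold acos. destruct (Rle_dec x (-1)); lra. Qed.

Lemma acos_cont1 : continuous acos 1.
Proof.
  apply continuity_pt_filterlim, continuity_pt_locally. intros eps.
  pose proof PI_RGT_0 as HPI.
  set (e := Rmin (eps/2) (PI/2)).
  assert (He : 0 < e) by (unfold e; apply Rmin_glb_lt; destruct eps; simpl; lra).
  assert (He2 : e <= PI/2) by apply Rmin_r.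
  assert (He3 : e < eps) by (unfold e; pose proof (Rmin_l (eps/2) (PI/2)); destruct eps; simpl in *; lra).
  assert (Hc : cos e < 1) by (rewrite <- cos_0; apply cos_decreasing_1; lra).
  assert (Hc2 : 0 <= cos e) by (apply cos_ge_0; lra).
  apply (loc_of _ _ (1 - cos e)); [lra|]. intros y Hy.
  rewrite acos_1. destruct (Rle_dec 1 y) as [H1|H1].
  - rewrite acos_ge1 by lra. rewrite Rminus_0_r, Rabs_R0. destruct eps; simpl; lra.
  - assert (Hy1 : cos e < y) by (apply Rabs_def2 in Hy; lra).
    pose proof (acos_bound y) as Hb.
    assert (acos y <= e).
    { destruct (Rle_dec (acos y) e) as [h|h]; [exact h|].
      exfalso. assert (cos (acos y) < cos e) by (apply cos_decreasing_1; lra).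
      rewrite cos_acos in H by lra. lra. }
    rewrite Rminus_0_r, Rabs_right by lra. lra.
Qed.

Lemma acos_cont x : continuous acos x.
Proof.
  destruct (Rlt_dec x (-1)) as [H1|H1].
  - apply (continuous_ext_loc _ (fun _ => PI)).
    + apply (loc_of _ _ (-1 - x)); [lra|]. intros y Hy. apply Rabs_def2 in Hy.
      rewrite acos_lem1 by lra; reflexivity.
    + apply continuous_const.
  - destruct (Rlt_dec 1 x) as [H2|H2].
    + apply (continuous_ext_loc _ (fun _ => 0)).
      * apply (loc_of _ _ (x - 1)); [lra|]. intros y Hy. apply Rabs_def2 in Hy.
        rewrite acos_ge1 by lra; reflexivity.
      * apply continuous_const.
    + destruct (Req_dec x 1) as [E|E]; [subst; apply acos_cont1|].
      destruct (Req_dec x (-1)) as [E'|E'].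
      * subst x. apply (continuous_ext (fun y => PI - acos (- y))).
        { intros y. cbv beta. rewrite acos_opp. lra. }
        apply (continuous_minus (fun _ => PI) (fun y => acos (-y))).
        apply continuous_const.
        apply (c_comp (fun y => - y) acos). apply c_der; auto_derive; trivial.
        replace (- -1) with 1 by ring. apply acos_cont1.
      * apply continuity_pt_filterlim, derivable_continuous_pt, derivable_pt_acos. lra.
Qed.


Lemma c_plus (x : R) (f g : R -> R) : continuous f x -> continuous g x -> continuous (fun y => f y + g y) x.
Proof. intros H1 H2. exact (@continuous_plus R_UniformSpace R_AbsRing R_NormedModule f g x H1 H2). Qed.
Lemma c_opp (x : R) (f : R -> R) : continuous f x -> continuous (fun y => - f y) x.
Proof. intros H1. exact (@continuous_opp R_UniformSpace R_AbsRing R_NormedModule f x H1). Qed.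
Lemma c_minus (x : R) (f g : R -> R) : continuous f x -> continuous g x -> continuous (fun y => f y - g y) x.
Proof. intros H1 H2. apply (c_plus x f (fun y => - g y)); auto. apply c_opp; auto. Qed.
Lemma c_mult (x : R) (f g : R -> R) : continuous f x -> continuous g x -> continuous (fun y => f y * g y) x.
Proof. intros H1 H2. exact (@continuous_mult R_UniformSpace R_AbsRing f g x H1 H2). Qed.
Lemma c_inv (x : R) (f : R -> R) : continuous f x -> f x <> 0 -> continuous (fun y => / f y) x.
Proof. intros H1 H2. exact (continuous_Rinv_comp f x H1 H2). Qed.
Lemma c_div (x : R) (f g : R -> R) : continuous f x -> continuous g x -> g x <> 0 -> continuous (fun y => f y / g y) x.
Proof. intros H1 H2 H3. apply (c_mult x f (fun y => / g y)); auto. apply c_inv; auto. Qed.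
Lemma c_const (x : R) (c : R) : continuous (fun _ : R => c) x.
Proof. apply continuous_const. Qed.
Lemma c_id (x : R) : continuous (fun y : R => y) x.
Proof. apply continuous_id. Qed.
Lemma c_acos (x : R) (f : R -> R) : continuous f x -> continuous (fun y => acos (f y)) x.
Proof. intros H. apply (c_comp f acos); auto. apply acos_cont. Qed.
Lemma c_sin (x : R) (f : R -> R) : continuous f x -> continuous (fun y => sin (f y)) x.
Proof. intros H. apply (c_comp f sin); auto. apply c_der. auto_derive; auto. Qed.
Lemma c_cos (x : R) (f : R -> R) : continuous f x -> continuous (fun y => cos (f y)) x.
Proof. intros H. apply (c_comp f cos); auto. apply c_der. auto_derive; auto. Qed.
Lemma c_exp (x : R) (f : R -> R) : continuous f x -> continuous (fun y => exp (f y)) x.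
Proof. intros H. apply (c_comp f exp); auto. apply c_der. auto_derive; auto. Qed.
Lemma c_atan (x : R) (f : R -> R) : continuous f x -> continuous (fun y => atan (f y)) x.
Proof. intros H. apply (c_comp f atan); auto. apply c_der. auto_derive; auto. Qed.
Lemma c_ln (x : R) (f : R -> R) : continuous f x -> 0 < f x -> continuous (fun y => ln (f y)) x.
Proof. intros H H0. apply (c_comp f ln); auto. apply c_der. auto_derive; auto. Qed.
Lemma c_pow (x : R) (f : R -> R) n : continuous f x -> continuous (fun y => f y ^ n) x.
Proof. intros H. apply (c_comp f (fun z => z ^ n)); auto. apply c_der. auto_derive; auto. Qed.
Lemma c_Rpower (x : R) (f g : R -> R) : continuous f x -> continuous g x -> 0 < f x -> continuous (fun y => Rpower (f y) (g y)) x.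
Proof. intros H1 H2 H3. unfold Rpower. apply (c_exp x (fun y => g y * ln (f y))).
  apply (c_mult x g (fun y => ln (f y))); auto. apply c_ln; auto. Qed.

Ltac cont := repeat match goal with
 | |- continuous (fun y => _) _ => first [ apply c_const | apply c_id | assumption ]
 | |- continuous (fun y => @?f y + @?g y) _ => apply (c_plus _ f g)
 | |- continuous (fun y => @?f y - @?g y) _ => apply (c_minus _ f g)
 | |- continuous (fun y => @?f y * @?g y) _ => apply (c_mult _ f g)
 | |- continuous (fun y => @?f y / @?g y) _ => apply (c_div _ f g)
 | |- continuous (fun y => - @?f y) _ => apply (c_opp _ f)
 | |- continuous (fun y => / @?f y) _ => apply (c_inv _ f)
 | |- continuous (fun y => acos (@?f y)) _ => apply (c_acos _ f)
 | |- continuous (fun y => sin (@?f y)) _ => apply (c_sin _ f)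
 | |- continuous (fun y => cos (@?f y)) _ => apply (c_cos _ f)
 | |- continuous (fun y => exp (@?f y)) _ => apply (c_exp _ f)
 | |- continuous (fun y => atan (@?f y)) _ => apply (c_atan _ f)
 | |- continuous (fun y => ln (@?f y)) _ => apply (c_ln _ f)
 | |- continuous (fun y => (@?f y) ^ _) _ => apply (c_pow _ f)
 | |- continuous (fun y => Rpower (@?f y) (@?g y)) _ => apply (c_Rpower _ f g)
 end.

Lemma cont_zeta2 Rc (p q : R -> R) x : continuous p x -> continuous q x -> p x <> 0 -> q x <> 0 -> Rc <> 0 ->
  continuous (fun y => zeta2 Rc (p y) (q y)) x.
Proof.
  intros Hp Hq H1 H2 H3. unfold zeta2. cbv beta zeta.
  cont; cbv beta; try (apply Rmult_integral_contrapositive_currified; [apply Rmult_integral_contrapositive_currified|]); auto; lra.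
Qed.


Lemma div_ge (N D c : R) : 0 < D -> c * D <= N -> c <= N / D.
Proof. intros H1 H2. apply Rmult_le_reg_r with D; [lra|]. unfold Rdiv. rewrite Rmult_assoc, Rinv_l, Rmult_1_r by lra. lra. Qed.
Lemma div_le (N D c : R) : 0 < D -> N <= c * D -> N / D <= c.
Proof. intros H1 H2. apply Rmult_le_reg_r with D; [lra|]. unfold Rdiv. rewrite Rmult_assoc, Rinv_l, Rmult_1_r by lra. lra. Qed.
Lemma div_gt (N D c : R) : 0 < D -> c * D < N -> c < N / D.
Proof. intros H1 H2. apply Rmult_lt_reg_r with D; [lra|]. unfold Rdiv. rewrite Rmult_assoc, Rinv_l, Rmult_1_r by lra. lra. Qed.
Lemma div_lt (N D c : R) : 0 < D -> N < c * D -> N / D < c.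
Proof. intros H1 H2. apply Rmult_lt_reg_r with D; [lra|]. unfold Rdiv. rewrite Rmult_assoc, Rinv_l, Rmult_1_r by lra. lra. Qed.

Definition uu Rc r0 r := (Rc^2 + r0^2 - r^2) / (2 * Rc * r0).
Definition vv Rc r0 r := (r0^2 + r^2 - Rc^2) / (2 * r0 * r).

Lemma zeta2_eq Rc r0 r : zeta2 Rc r0 r =
  PI * r^2 - acos (uu Rc r0 r) * Rc^2 + Rc^2 * sin (acos (uu Rc r0 r)) * cos (acos (uu Rc r0 r))
  - acos (vv Rc r0 r) * r^2 + r^2 * sin (acos (vv Rc r0 r)) * cos (acos (vv Rc r0 r)).
Proof. reflexivity. Qed.

Lemma Z_left Rc r0 r : 0 < Rc -> 0 < r0 -> 0 < r -> r <= Rc - r0 -> zeta2 Rc r0 r = 0.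
Proof.
  intros HR H0 Hr H. rewrite zeta2_eq.
  rewrite (acos_ge1 (uu Rc r0 r)). rewrite (acos_lem1 (vv Rc r0 r)).
  rewrite sin_0, sin_PI. ring.
  - unfold vv. apply div_le. apply Rmult_lt_0_compat; lra. nra.
  - unfold uu. apply div_ge. apply Rmult_lt_0_compat; [|lra]; lra. nra.
Qed.

Lemma Z_right Rc r0 r : 0 < Rc -> 0 < r0 -> Rc + r0 <= r -> zeta2 Rc r0 r = PI * (r^2 - Rc^2).
Proof.
  intros HR H0 H. rewrite zeta2_eq.
  rewrite (acos_lem1 (uu Rc r0 r)). rewrite (acos_ge1 (vv Rc r0 r)).
  rewrite sin_0, sin_PI. ring.
  - unfold vv. apply div_ge. apply Rmult_lt_0_compat; lra. nra.
  - unfold uu. apply div_le. apply Rmult_lt_0_compat; [|lra]; lra. nra.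
Qed.

Lemma F_clamp lam Rc r0 r : 0 < Rc -> 0 < r0 -> 0 < r ->
  F_r1 lam Rc r0 r = 1 - exp (- lam * zeta2 Rc r0 r).
Proof.
  intros HR H0 Hr. unfold F_r1.
  destruct (Rle_dec r (Rc - r0)) as [h1|h1].
  - rewrite Z_left by lra. rewrite Rmult_0_r, exp_0. ring.
  - destruct (Rlt_dec r (Rc + r0)) as [h2|h2]; [reflexivity|].
    rewrite Z_right by lra. f_equal. f_equal. ring.
Qed.

Lemma mid_closed Rc r0 r : 0 < r0 <= Rc -> 0 < r -> Rc - r0 <= r <= Rc + r0 ->
  -1 <= uu Rc r0 r <= 1 /\ -1 <= vv Rc r0 r <= 1.
Proof.
  intros H0 Hr H. unfold uu, vv. assert (0 < 2 * Rc * r0) by nra. assert (0 < 2 * r0 * r) by nra.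
  repeat split; [apply div_ge|apply div_le|apply div_ge|apply div_le]; auto; nra.
Qed.

Lemma mid_open Rc r0 r : 0 < r0 <= Rc -> 0 < r -> Rc - r0 < r < Rc + r0 ->
  -1 < uu Rc r0 r < 1 /\ -1 < vv Rc r0 r < 1.
Proof.
  intros H0 Hr H. unfold uu, vv. assert (0 < 2 * Rc * r0) by nra. assert (0 < 2 * r0 * r) by nra.
  repeat split; [apply div_gt|apply div_lt|apply div_gt|apply div_lt]; auto; nra.
Qed.


Definition phi x := acos x - x * sqrt (1 - x^2).

Lemma acos_der x : -1 < x < 1 -> is_derive acos x (-1 / sqrt (1 - x^2)).
Proof.
  intros H. apply is_derive_Reals. apply (derive_pt_eq_1 _ _ _ (derivable_pt_acos x H)).
  rewrite derive_pt_acos. rewrite Rsqr_pow2. reflexivity.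
Qed.

Lemma phi_der x : -1 < x < 1 -> is_derive phi x (-2 * sqrt (1 - x^2)).
Proof.
  intros H. assert (Hs : 0 < 1 - x^2) by nra.
  assert (Hq : 0 < sqrt (1 - x^2)) by (apply sqrt_lt_R0; lra).
  assert (E := sqrt_sqrt (1 - x^2) ltac:(lra)).
  unfold phi.
  assert (H2 : is_derive (fun y => y * sqrt (1 - y^2)) x (sqrt (1 - x^2) - x^2 / sqrt (1 - x^2))).
  { auto_derive. lra. replace (1 + - (x * (x * 1))) with (1 - x^2) by ring. field. lra. }
  pose proof (is_derive_minus _ _ _ _ _ (acos_der x H) H2) as H3.
  eapply is_derive_ext; [intros; reflexivity|].
  replace (-2 * sqrt (1 - x^2)) with (minus (-1 / sqrt (1 - x ^ 2)) (sqrt (1 - x ^ 2) - x ^ 2 / sqrt (1 - x ^ 2))).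
  exact H3.
  unfold minus, plus, opp; simpl. replace (x * (x * 1)) with (x^2) by ring. set (s := sqrt (1 - x^2)) in *.
  transitivity ((-1 - s*s + x^2)/s); [field; lra|]. rewrite E.
  replace (-1 - (1 - x ^ 2) + x ^ 2) with (-2 * (s*s)) by (rewrite E; ring). field. lra.
Qed.

Definition G Rc r0 y := PI*y^2 - Rc^2 * phi (uu Rc r0 y) - y^2 * phi (vv Rc r0 y).

Lemma G_eq Rc r0 r : 0 < r0 <= Rc -> 0 < r -> Rc - r0 <= r <= Rc + r0 -> zeta2 Rc r0 r = G Rc r0 r.
Proof.
  intros H0 Hr H. destruct (mid_closed Rc r0 r H0 Hr H) as [Hu Hv].
  rewrite zeta2_eq, !sin_acos, !cos_acos by auto. rewrite !Rsqr_pow2. unfold G, phi. ring.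
Qed.

Lemma sqrt_scale a x : 0 <= a -> a * sqrt x = sqrt (a^2 * x).
Proof. intros Ha. rewrite sqrt_mult_alt by nra. rewrite sqrt_pow2 by lra. reflexivity. Qed.

Lemma G_der Rc r0 r : 0 < r0 <= Rc -> 0 < r -> Rc - r0 < r < Rc + r0 ->
  is_derive (G Rc r0) r (2 * r * (PI - acos (vv Rc r0 r))).
Proof.
  intros H0 Hr H. destruct (mid_open Rc r0 r H0 Hr H) as [Hu Hv].
  assert (Du := phi_der _ Hu). assert (Dv := phi_der _ Hv).
  assert (Duu : is_derive (uu Rc r0) r (- r / (Rc * r0))).
  { unfold uu. auto_derive. nra. field. lra. }
  assert (Dvv : is_derive (vv Rc r0) r ((r^2 - r0^2 + Rc^2) / (2 * r0 * r^2))).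
  { unfold vv. auto_derive. nra. field. lra. }
  assert (Key : Rc * sqrt (1 - uu Rc r0 r ^ 2) = r * sqrt (1 - vv Rc r0 r ^ 2)).
  { rewrite !sqrt_scale by lra. f_equal. unfold uu, vv. field. lra. }
  unfold G. auto_derive.
  - repeat split.
    + exists (-2 * sqrt (1 - (uu Rc r0 r)^2)); exact Du.
    + exists (- r / (Rc * r0)); exact Duu.
    + exists (-2 * sqrt (1 - (vv Rc r0 r)^2)); exact Dv.
    + exists ((r^2 - r0^2 + Rc^2) / (2 * r0 * r^2)); exact Dvv.
  - replace (Derive (fun x : R => phi x) (uu Rc r0 r)) with (-2 * sqrt (1 - (uu Rc r0 r)^2))
      by (symmetry; apply is_derive_unique; exact Du).
    replace (Derive (fun x : R => phi x) (vv Rc r0 r)) with (-2 * sqrt (1 - (vv Rc r0 r)^2))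
      by (symmetry; apply is_derive_unique; exact Dv).
    replace (Derive (fun x : R => uu Rc r0 x) r) with (- r / (Rc * r0))
      by (symmetry; apply is_derive_unique; exact Duu).
    replace (Derive (fun x : R => vv Rc r0 x) r) with ((r^2 - r0^2 + Rc^2) / (2 * r0 * r^2))
      by (symmetry; apply is_derive_unique; exact Dvv).
    replace (sqrt (1 - uu Rc r0 r ^ 2)) with (r * sqrt (1 - vv Rc r0 r ^ 2) / Rc)
      by (rewrite <- Key; field; lra).
    unfold phi. set (A := acos (vv Rc r0 r)). set (S2 := sqrt (1 - vv Rc r0 r ^ 2)). unfold vv. field. lra.
Qed.


Lemma c_sqrt x (f : R -> R) : continuous f x -> 0 <= f x -> continuous (fun y => sqrt (f y)) x.
Proof. intros H H0. apply (c_comp f sqrt); auto. apply continuity_pt_filterlim, continuity_pt_sqrt; auto. Qed.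

Lemma G_cont Rc r0 x : 0 < r0 <= Rc -> 0 < x -> Rc - r0 <= x <= Rc + r0 -> continuous (G Rc r0) x.
Proof.
  intros H0 Hx H. destruct (mid_closed Rc r0 x H0 Hx H) as [Hu Hv].
  unfold G, phi, uu, vv in *.
  cont; cbv beta; try (apply c_sqrt; cont); cbv beta; try nra.
Qed.

Lemma vv_gt Rc r0 c : 0 < r0 -> 0 < c -> Rc - r0 < c -> 0 < Rc -> -1 < vv Rc r0 c.
Proof. intros. unfold vv. apply div_gt. nra. nra. Qed.

Lemma acos_lt_PI x : -1 < x -> acos x < PI.
Proof.
  intros H. pose proof PI_RGT_0. destruct (Rlt_dec x 1).
  - apply acos_bound_lt; lra.
  - rewrite acos_ge1 by lra. lra.
Qed.

Lemma Z_mid Rc r0 a b : 0 < r0 <= Rc -> 0 < a -> Rc - r0 <= a -> a < b -> b <= Rc + r0 ->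
  zeta2 Rc r0 a < zeta2 Rc r0 b.
Proof.
  intros H0 Ha H1 H2 H3.
  set (m := (a + b) / 2).
  rewrite (G_eq Rc r0 a), (G_eq Rc r0 b) by lra.
  set (df := fun c => 2 * c * (PI - acos (vv Rc r0 c))).
  assert (Hd : forall x, Rc - r0 < x < Rc + r0 -> is_derive (G Rc r0) x (df x)).
  { intros x Hx. apply G_der; lra. }
  assert (Hc : forall x, Rc - r0 <= x <= Rc + r0 -> 0 < x -> continuity_pt (G Rc r0) x).
  { intros x Hx Hx0. apply continuity_pt_filterlim, G_cont; lra. }
  destruct (MVT_gen (G Rc r0) a m df) as [c1 [Hc1 E1]].
  { intros x Hx. rewrite Rmin_left, Rmax_right in Hx by (unfold m; lra). apply Hd. unfold m in *; lra. }
  { intros x Hx. rewrite Rmin_left, Rmax_right in Hx by (unfold m; lra). apply Hc; unfold m in *; lra. }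
  destruct (MVT_gen (G Rc r0) m b df) as [c2 [Hc2 E2]].
  { intros x Hx. rewrite Rmin_left, Rmax_right in Hx by (unfold m; lra). apply Hd. unfold m in *; lra. }
  { intros x Hx. rewrite Rmin_left, Rmax_right in Hx by (unfold m; lra). apply Hc; unfold m in *; lra. }
  rewrite Rmin_left, Rmax_right in Hc1, Hc2 by (unfold m; lra).
  assert (P1 : 0 <= df c1).
  { unfold df. pose proof (acos_bound (vv Rc r0 c1)). apply Rmult_le_pos; lra. }
  assert (P2 : 0 < df c2).
  { unfold df. assert (acos (vv Rc r0 c2) < PI) by (apply acos_lt_PI, vv_gt; unfold m in *; lra).
    apply Rmult_lt_0_compat; unfold m in *; lra. }
  assert (0 <= df c1 * (m - a)) by (apply Rmult_le_pos; unfold m; lra).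
  assert (0 < df c2 * (b - m)) by (apply Rmult_lt_0_compat; unfold m; lra).
  lra.
Qed.

Lemma Z_strict Rc r0 a b : 0 < r0 <= Rc -> 0 < a -> a < b -> Rc - r0 < b ->
  zeta2 Rc r0 a < zeta2 Rc r0 b.
Proof.
  intros H0 Ha H1 H2. pose proof PI_RGT_0.
  destruct (Rle_dec b (Rc + r0)) as [h|h].
  - destruct (Rle_dec (Rc - r0) a) as [h'|h'].
    + apply Z_mid; lra.
    + rewrite (Z_left Rc r0 a) by lra. rewrite <- (Z_left Rc r0 (Rc - r0)) by lra.
      apply Z_mid; lra.
  - rewrite (Z_right Rc r0 b) by lra.
    destruct (Rle_dec (Rc + r0) a) as [h'|h'].
    + rewrite (Z_right Rc r0 a) by lra. apply Rmult_lt_compat_l; nra.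
    + destruct (Rle_dec (Rc - r0) a) as [h''|h''].
      * apply Rlt_trans with (zeta2 Rc r0 (Rc + r0)). apply Z_mid; lra.
        rewrite Z_right by lra. apply Rmult_lt_compat_l; nra.
      * rewrite (Z_left Rc r0 a) by lra. apply Rmult_lt_0_compat; nra.
Qed.

Lemma Z_le Rc r0 a b : 0 < r0 <= Rc -> 0 < a -> a <= b -> zeta2 Rc r0 a <= zeta2 Rc r0 b.
Proof.
  intros H0 Ha H1. destruct (Req_dec a b) as [E|E]; [subst; lra|].
  destruct (Rle_dec b (Rc - r0)).
  - rewrite !Z_left by lra. lra.
  - left. apply Z_strict; lra.
Qed.

Lemma exp_le_exp x y : x <= y -> exp x <= exp y.
Proof. intros [H|H]; [left; apply exp_increasing; auto | subst; lra]. Qed.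

Lemma F_lt lam Rc r0 a b : 0 < lam -> 0 < r0 <= Rc -> 0 < a -> a < b -> Rc - r0 < b ->
  F_r1 lam Rc r0 a < F_r1 lam Rc r0 b.
Proof.
  intros Hl H0 Ha H1 H2. rewrite !F_clamp by lra.
  assert (zeta2 Rc r0 a < zeta2 Rc r0 b) by (apply Z_strict; lra).
  assert (exp (- lam * zeta2 Rc r0 b) < exp (- lam * zeta2 Rc r0 a)) by (apply exp_increasing; nra).
  lra.
Qed.

Lemma F_le lam Rc r0 a b : 0 < lam -> 0 < r0 <= Rc -> 0 < a -> a <= b ->
  F_r1 lam Rc r0 a <= F_r1 lam Rc r0 b.
Proof.
  intros Hl H0 Ha H1. rewrite !F_clamp by lra.
  assert (zeta2 Rc r0 a <= zeta2 Rc r0 b) by (apply Z_le; lra).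
  assert (exp (- lam * zeta2 Rc r0 b) <= exp (- lam * zeta2 Rc r0 a)) by (apply exp_le_exp; nra).
  lra.
Qed.

Lemma F_bounds lam Rc r0 r : 0 < lam -> 0 < r0 < Rc -> 0 < r ->
  0 <= F_r1 lam Rc r0 r <= 1.
Proof.
  intros Hl H0 Hr. rewrite F_clamp by lra.
  assert (0 <= zeta2 Rc r0 r).
  { destruct (Rle_dec r (Rc - r0)). rewrite Z_left by lra; lra.
    rewrite <- (Z_left Rc r0 (Rc - r0)) by lra. apply Z_le; lra. }
  pose proof (exp_pos (- lam * zeta2 Rc r0 r)).
  assert (exp (- lam * zeta2 Rc r0 r) <= 1) by (rewrite <- exp_0; apply exp_le_exp; nra).
  lra.
Qed.


Lemma ex_int (g : R -> R) b : 0 < b -> (forall x, 0 < x <= b -> continuous g x) ->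
  (forall x, 0 < x < b -> Rabs (g x) <= x) -> ex_RInt g 0 b.
Proof.
  intros Hb Hc Hbd.
  set (gt := fun x => if Rlt_dec 0 x then g x else 0).
  apply (ex_RInt_ext gt).
  { intros x Hx. rewrite Rmin_left, Rmax_right in Hx by lra. unfold gt.
    destruct (Rlt_dec 0 x); [reflexivity | lra]. }
  apply (@ex_RInt_continuous R_CompleteNormedModule). intros z Hz. rewrite Rmin_left, Rmax_right in Hz by lra.
  destruct (Rlt_dec 0 z) as [hz|hz].
  - apply (continuous_ext_loc _ g).
    + apply (loc_of _ _ z hz). intros y Hy. apply Rabs_def2 in Hy. unfold gt.
      destruct (Rlt_dec 0 y); [reflexivity | lra].
    + apply Hc; lra.
  - assert (z = 0) by lra. subst z.
    apply continuity_pt_filterlim, continuity_pt_locally. intros eps.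
    apply (loc_of _ _ (Rmin b eps)). { destruct eps; simpl; apply Rmin_glb_lt; lra. }
    intros y Hy. unfold gt. destruct (Rlt_dec 0 0); [lra|].
    pose proof (Rmin_l b eps). pose proof (Rmin_r b eps).
    destruct (Rlt_dec 0 y) as [hy|hy].
    + rewrite Rminus_0_r in Hy. rewrite Rabs_right in Hy by lra.
      rewrite Rminus_0_r. apply Rle_lt_trans with y; [apply Hbd; lra | lra].
    + rewrite Rminus_0_r, Rabs_R0. destruct eps; simpl; lra.
Qed.

Lemma int_lt (f g : R -> R) b : 0 < b -> ex_RInt f 0 b -> ex_RInt g 0 b ->
  (forall x, 0 < x < b -> f x <= g x) ->
  (forall x, 0 < x <= b -> continuous f x) -> (forall x, 0 < x <= b -> continuous g x) ->
  f b < g b -> RInt f 0 b < RInt g 0 b.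
Proof.
  intros Hb If Ig Hle Cf Cg Hlt.
  assert (Ch : continuity_pt (fun x => g x - f x) b).
  { apply continuity_pt_filterlim. apply (c_minus b g f); [apply Cg|apply Cf]; lra. }
  assert (He : 0 < (g b - f b) / 2) by lra.
  destruct (proj1 (continuity_pt_locally _ _) Ch (mkposreal _ He)) as [d Hd]. simpl in Hd.
  destruct d as [d dpos]. simpl in Hd.
  set (c := b - Rmin (d/2) (b/2)).
  assert (Hc1 : 0 < c < b).
  { unfold c. pose proof (Rmin_r (d/2) (b/2)). assert (0 < Rmin (d/2) (b/2)) by (apply Rmin_glb_lt; lra). lra. }
  assert (Hc2 : b - c < d) by (unfold c; pose proof (Rmin_l (d/2) (b/2)); lra).
  assert (E1 : RInt f 0 b = RInt f 0 c + RInt f c b).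
  { symmetry. apply (RInt_Chasles f 0 c b).
    apply (ex_RInt_Chasles_1 f 0 c b); [lra|auto]. apply (ex_RInt_Chasles_2 f 0 c b); [lra|auto]. }
  assert (E2 : RInt g 0 b = RInt g 0 c + RInt g c b).
  { symmetry. apply (RInt_Chasles g 0 c b).
    apply (ex_RInt_Chasles_1 g 0 c b); [lra|auto]. apply (ex_RInt_Chasles_2 g 0 c b); [lra|auto]. }
  assert (L1 : RInt f 0 c <= RInt g 0 c).
  { apply RInt_le; [lra| apply (ex_RInt_Chasles_1 f 0 c b); [lra|auto] | apply (ex_RInt_Chasles_1 g 0 c b); [lra|auto] |].
    intros; apply Hle; lra. }
  assert (L2 : RInt f c b < RInt g c b).
  { apply RInt_lt; [lra| intros; apply Cg; lra | intros; apply Cf; lra |].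
    intros x Hx. assert (Habs : Rabs (x - b) < d) by (rewrite Rabs_left by lra; lra).
    specialize (Hd x Habs). apply Rabs_def2 in Hd. lra. }
  lra.
Qed.


Lemma Rpower_pos x y : 0 < Rpower x y.
Proof. unfold Rpower. apply exp_pos. Qed.

Lemma A_pos H aN al d r0 : 0 < d -> 0 < A_s H aN al d r0.
Proof. intros. unfold A_s. apply Rpower_pos. Qed.
Lemma B_pos H aN al d r0 : 0 < d -> 0 < B_s H aN al d r0.
Proof. intros. unfold B_s. apply Rpower_pos. Qed.

Lemma A_mono H aN al d1 d2 r0 : 0 < aN -> 0 < d1 -> d1 < d2 -> A_s H aN al d1 r0 < A_s H aN al d2 r0.
Proof.
  intros. unfold A_s. apply Rlt_Rpower_l. apply Rdiv_lt_0_compat; lra.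
  pose proof (Rpower_pos (H^2 + r0^2) (al/2)). split; nra.
Qed.
Lemma B_mono H aN al d1 d2 r0 : 0 < aN -> 0 < d1 -> d1 < d2 -> B_s H aN al d2 r0 < B_s H aN al d1 r0.
Proof.
  intros. unfold B_s. apply Rlt_Rpower_l. apply Rdiv_lt_0_compat; lra.
  pose proof (Rpower_pos (H^2 + r0^2) (al/2)).
  assert (/ d2 < / d1) by (apply Rinv_lt_contravar; nra).
  assert (0 < / d2) by (apply Rinv_0_lt_compat; lra). split; nra.
Qed.

Lemma A_cont H aN al d x : 0 < H -> 0 < d -> continuous (A_s H aN al d) x.
Proof.
  intros HH Hd. unfold A_s. cont; cbv beta;
  first [ nra | apply Rmult_lt_0_compat; auto; apply Rpower_pos ].
Qed.
Lemma B_cont H aN al d x : 0 < H -> 0 < d -> continuous (B_s H aN al d) x.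
Proof.
  intros HH Hd. unfold B_s. cont; cbv beta;
  first [ nra | apply Rmult_lt_0_compat; [apply Rinv_0_lt_compat; auto| apply Rpower_pos] ].
Qed.

Lemma PL_bounds H B C r0 : 0 < C -> 0 < P_L H B C r0 < 1.
Proof.
  intros HC. unfold P_L. pose proof (exp_pos (- B * (atan (H / r0) - C))).
  assert (1 < 1 + C * exp (- B * (atan (H / r0) - C))) by nra.
  split. apply Rdiv_lt_0_compat; lra. apply div_lt; lra.
Qed.

Lemma PL_cont H B C x : 0 < C -> 0 < x -> continuous (P_L H B C) x.
Proof.
  intros HC Hx. unfold P_L. cont; cbv beta.
  - lra.
  - pose proof (exp_pos (- B * (atan (H / x) - C))). nra.
Qed.


Lemma cont_FA lam Rc (q : R -> R) x : 0 < Rc -> 0 < x -> (forall y, 0 < q y) -> continuous q x ->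
  continuous (fun y => F_r1 lam Rc y (q y)) x.
Proof.
  intros HR Hx Hq Hc.
  apply (continuous_ext_loc _ (fun y => 1 - exp (- lam * zeta2 Rc y (q y)))).
  - apply (loc_of _ _ x Hx). intros y Hy. apply Rabs_def2 in Hy.
    rewrite F_clamp; auto; try lra.
  - apply (c_minus x (fun _ => 1)); [apply c_const|].
    apply (c_exp x (fun y => - lam * zeta2 Rc y (q y))).
    apply (c_mult x (fun _ => - lam)); [apply c_const|].
    apply (cont_zeta2 Rc (fun y => y) q x).
    all: cbv beta; first [apply c_id | assumption | specialize (Hq x); lra | lra].
Qed.

Lemma bound3 p f r : 0 <= p <= 1 -> -1 <= f <= 1 -> 0 < r -> Rabs (p * f * r) <= r.
Proof. intros Hp Hf Hr. assert (-1 <= p * f <= 1) by (split; nra). apply Rabs_le. split; nra. Qed.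

Lemma main_cmp Rc (P Phi1 Phi2 : R -> R) : 0 < Rc ->
  (forall x, 0 < x -> 0 < P x <= 1) -> (forall x, 0 < x -> continuous P x) ->
  (forall x, 0 < x -> continuous Phi1 x) -> (forall x, 0 < x -> continuous Phi2 x) ->
  (forall x, 0 < x < Rc -> -1 <= Phi1 x <= 1) -> (forall x, 0 < x < Rc -> -1 <= Phi2 x <= 1) ->
  (forall x, 0 < x < Rc -> Phi1 x <= Phi2 x) -> Phi1 Rc < Phi2 Rc ->
  RInt (fun r0 => P r0 * Phi1 r0 * r0) 0 Rc < RInt (fun r0 => P r0 * Phi2 r0 * r0) 0 Rc.
Proof.
  intros HR HP CP C1 C2 B1 B2 L S.
  assert (CC : forall Phi : R -> R, (forall x, 0 < x -> continuous Phi x) ->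
     forall x, 0 < x <= Rc -> continuous (fun r0 => P r0 * Phi r0 * r0) x).
  { intros Phi CPhi x Hx. apply (c_mult x (fun r0 => P r0 * Phi r0) (fun r0 => r0)); [|apply c_id].
    apply c_mult; [apply CP | apply CPhi]; lra. }
  assert (EX : forall Phi : R -> R, (forall x, 0 < x -> continuous Phi x) ->
     (forall x, 0 < x < Rc -> -1 <= Phi x <= 1) -> ex_RInt (fun r0 => P r0 * Phi r0 * r0) 0 Rc).
  { intros Phi CPhi BPhi. apply ex_int; auto. intros x Hx. apply bound3; auto.
    specialize (HP x ltac:(lra)); lra. lra. }
  apply int_lt; auto.
  - intros x Hx. specialize (HP x ltac:(lra)). specialize (L x Hx). apply Rmult_le_compat_r; [lra|].
    apply Rmult_le_compat_l; lra.
  - specialize (HP Rc HR). apply Rmult_lt_compat_r; [lra|]. apply Rmult_lt_compat_l; lra.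
Qed.

Lemma final_cmp Rc (I1 I2 J1 J2 : R) : 0 < Rc -> I1 < I2 -> J1 < J2 ->
  2 * PI * (I1 + J1) / (PI * Rc^2) < 2 * PI * (I2 + J2) / (PI * Rc^2).
Proof.
  intros HR H1 H2. pose proof PI_RGT_0. unfold Rdiv. apply Rmult_lt_compat_r.
  apply Rinv_0_lt_compat; apply Rmult_lt_0_compat; [lra | apply pow_lt; lra]. nra.
Qed.

Theorem corollary1 (lam Rc H alphaL alphaN B C : R) :
  0 < lam -> 0 < Rc -> 0 < H -> 0 < alphaL -> 0 < alphaN -> 0 < B -> 0 < C ->
  forall d1 d2 : R, 0 < d1 -> d1 < d2 -> d2 < 1 ->
    Cbar_A1 lam Rc H alphaL alphaN B C d1 < Cbar_A1 lam Rc H alphaL alphaN B C d2 /\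
    Cbar_A3 lam Rc H alphaL alphaN B C d1 < Cbar_A3 lam Rc H alphaL alphaN B C d2 /\
    Cbar_A2 lam Rc H alphaL alphaN B C d2 < Cbar_A2 lam Rc H alphaL alphaN B C d1.
Proof.
  intros Hl HR HH HaL HaN HB HC d1 d2 Hd1 Hd12 Hd2.
  assert (HPL : forall x, 0 < x -> 0 < P_L H B C x <= 1) by (intros x _; pose proof (PL_bounds H B C x HC); lra).
  assert (HPN : forall x, 0 < x -> 0 < P_N H B C x <= 1) by (intros x _; unfold P_N; pose proof (PL_bounds H B C x HC); lra).
  assert (CPL : forall x, 0 < x -> continuous (P_L H B C) x) by (intros; apply PL_cont; auto).
  assert (CPN : forall x, 0 < x -> continuous (P_N H B C) x).
  { intros x Hx. unfold P_N. apply (c_minus x (fun _ => 1) (P_L H B C)); [apply c_const|auto]. }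
  assert (CA : forall al d x, 0 < d -> 0 < x -> continuous (fun r0 => F_r1 lam Rc r0 (A_s H alphaN al d r0)) x).
  { intros al d x Hd Hx. apply cont_FA; auto. intros; apply A_pos; auto. apply A_cont; auto. }
  assert (CB : forall al d x, 0 < d -> 0 < x -> continuous (fun r0 => F_r1 lam Rc r0 (B_s H alphaN al d r0)) x).
  { intros al d x Hd Hx. apply cont_FA; auto. intros; apply B_pos; auto. apply B_cont; auto. }
  assert (BA : forall al d x, 0 < d -> 0 < x < Rc -> 0 <= F_r1 lam Rc x (A_s H alphaN al d x) <= 1).
  { intros. apply F_bounds; auto. apply A_pos; auto. }
  assert (BB : forall al d x, 0 < d -> 0 < x < Rc -> 0 <= F_r1 lam Rc x (B_s H alphaN al d x) <= 1).
  { intros. apply F_bounds; auto. apply B_pos; auto. }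
  assert (LA : forall al x, 0 < x <= Rc -> F_r1 lam Rc x (A_s H alphaN al d1 x) <= F_r1 lam Rc x (A_s H alphaN al d2 x)).
  { intros. apply F_le; auto. apply A_pos; auto. left; apply A_mono; auto. }
  assert (LB : forall al x, 0 < x <= Rc -> F_r1 lam Rc x (B_s H alphaN al d2 x) <= F_r1 lam Rc x (B_s H alphaN al d1 x)).
  { intros. apply F_le; auto. apply B_pos; lra. left; apply B_mono; auto. }
  assert (SA : forall al, F_r1 lam Rc Rc (A_s H alphaN al d1 Rc) < F_r1 lam Rc Rc (A_s H alphaN al d2 Rc)).
  { intros. apply F_lt; auto; try lra. apply A_pos; auto. apply A_mono; auto.
    pose proof (A_pos H alphaN al d2 Rc ltac:(lra)). lra. }
  assert (SB : forall al, F_r1 lam Rc Rc (B_s H alphaN al d2 Rc) < F_r1 lam Rc Rc (B_s H alphaN al d1 Rc)).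
  { intros. apply F_lt; auto; try lra. apply B_pos; lra. apply B_mono; auto.
    pose proof (B_pos H alphaN al d1 Rc ltac:(lra)). lra. }
  split; [|split]; unfold Cbar_A1, Cbar_A2, Cbar_A3, C_A1, C_A2, C_A3; apply final_cmp; auto;
    apply main_cmp; auto.
  all: try (intros x Hx; first [ apply CA; lra | apply CB; lra
     | apply (c_minus x (fun _ => 1)); [apply c_const | apply CB; lra]
     | apply (c_minus x); [ first [apply c_const | apply CB; lra] | first [apply CA | apply CB]; lra ] ]).
  all: try (intros x Hx;
    pose proof (BA alphaL d1 x ltac:(lra) Hx); pose proof (BA alphaL d2 x ltac:(lra) Hx);
    pose proof (BA alphaN d1 x ltac:(lra) Hx); pose proof (BA alphaN d2 x ltac:(lra) Hx);
    pose proof (BB alphaL d1 x ltac:(lra) Hx); pose proof (BB alphaL d2 x ltac:(lra) Hx);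
    pose proof (BB alphaN d1 x ltac:(lra) Hx); pose proof (BB alphaN d2 x ltac:(lra) Hx);
    pose proof (LA alphaL x ltac:(lra)); pose proof (LA alphaN x ltac:(lra));
    pose proof (LB alphaL x ltac:(lra)); pose proof (LB alphaN x ltac:(lra)); lra).
  all: try (pose proof (SA alphaL); pose proof (SA alphaN); pose proof (SB alphaL); pose proof (SB alphaN);
    pose proof (LA alphaL Rc ltac:(lra)); pose proof (LA alphaN Rc ltac:(lra));
    pose proof (LB alphaL Rc ltac:(lra)); pose proof (LB alphaN Rc ltac:(lra)); lra).
Qed.
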